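(* Let $p$ be a prime, $\theta\in\mathbb F_p^*$, and $B_1,B_2\subset\mathbb F_p$. Then $$\left|\sum_{b_1\in B_1,\,b_2\in B_2}e_p\left(\theta(b_1-b_2)^2\right)\right|\le|B_1|^{1/2}E(B_1,B_1)^{1/8}|B_2|^{1/2}E(B_2,B_2)^{1/8}p^{1/8}.$$
   Context: $e_p(x)=e^{2\pi ix/p}$ for $x\in\mathbb F_p$; $\mathbb F_p^*=\mathbb F_p\setminus\{0\}$. $E(B,B)$ is the number of solutions of $b_1+b_2=b_3+b_4$ with all $b_i\in B$. *)

(* Defs.v *)
From HB Require Import structures.
From mathcomp Require Import all_boot all_order all_algebra.
From mathcomp Require Import all_classical all_reals all_analysis.
From mathcomp Require Import complex.
Set Implicit Arguments. Unset Strict Implicit. Unset Printing Implicit Defensive.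
Import Order.TTheory GRing.Theory Num.Theory.
Local Open Scope ring_scope.

(* e_p(x) = exp(2 pi i x / p) for x in F_p, represented by its canonical
   representative val x in {0,...,p-1}. *)
Definition e_p (R : realType) (p : nat) (x : 'F_p) : R[i] :=
  Complex (cos (2 * pi * (val x)%:R / p%:R)) (sin (2 * pi * (val x)%:R / p%:R)).

Definition energy (p : nat) (B : {set 'F_p}) : nat :=
  #|[set x : ('F_p * 'F_p) * ('F_p * 'F_p) |
     [&& x.1.1 \in B, x.1.2 \in B, x.2.1 \in B, x.2.2 \in B &
         x.1.1 + x.1.2 == x.2.1 + x.2.2]]|.

Definition cmod (R : realType) (z : R[i]) : R := ComplexField.Normc.normc z.

(* Main.v *)
Require Import Defs.
From HB Require Import structures.
From mathcomp Require Import all_boot all_order all_algebra.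
From mathcomp Require Import all_classical all_reals all_analysis.
From mathcomp Require Import complex.
From mathcomp Require Import ring lra finfield.
Import Order.TTheory GRing.Theory Num.Theory.
Local Open Scope ring_scope.


Lemma CS (R : realFieldType) (I : finType) (P : pred I) (f g : I -> R) :
  (\sum_(i | P i) f i * g i) ^+ 2 <=
  (\sum_(i | P i) f i ^+ 2) * (\sum_(i | P i) g i ^+ 2).
Proof.
set A := \sum_(i | P i) f i ^+ 2; set B := \sum_(i | P i) g i ^+ 2.
set C := \sum_(i | P i) f i * g i.
have h : 0 <= \sum_(i | P i) \sum_(j | P j) (f i * g j - f j * g i) ^+ 2.
  by apply: sumr_ge0 => i _; apply: sumr_ge0 => j _; apply: sqr_ge0.
have eAB : A * B = \sum_(i | P i) \sum_(j | P j) f i ^+ 2 * g j ^+ 2.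
  by rewrite /A big_distrl; apply: eq_bigr => i _; rewrite /B big_distrr.
have eBA : B * A = \sum_(i | P i) \sum_(j | P j) f j ^+ 2 * g i ^+ 2.
  by rewrite /B big_distrl; apply: eq_bigr => i _; rewrite /A big_distrr;
    apply: eq_bigr => j _; rewrite mulrC.
have eCC : C * C = \sum_(i | P i) \sum_(j | P j) (f i * g i) * (f j * g j).
  by rewrite /C big_distrl; apply: eq_bigr => i _; rewrite big_distrr.
have e : \sum_(i | P i) \sum_(j | P j) (f i * g j - f j * g i) ^+ 2
   = A * B + B * A - (C * C) *+ 2.
  rewrite eAB eBA eCC -sumrMnl -big_split -sumrB /=; apply: eq_bigr => i _.
  rewrite -sumrMnl -big_split -sumrB /=; apply: eq_bigr => j _; ring.
rewrite e in h; rewrite expr2; lra.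
Qed.


Lemma energyE (T : ringType) (p : nat) (B : {set 'F_p}) :
  ((energy B)%:R : T) = \sum_(a in B) \sum_(b in B) \sum_(c in B) \sum_(d in B)
     ((a + b == c + d)%:R : T).
Proof.
under eq_bigr do under eq_bigr do rewrite pair_big.
under eq_bigr do rewrite pair_big.
rewrite pair_big_dep /energy -sumr_const big_mkcond [RHS]big_mkcond /=.
rewrite (reindex (fun i : 'F_p * ('F_p * ('F_p * 'F_p)) =>
   ((i.1, i.2.1), (i.2.2.1, i.2.2.2)))) /=; last first.
  apply: onW_bij.
  by exists (fun x : ('F_p * 'F_p) * ('F_p * 'F_p) => (x.1.1, (x.1.2, (x.2.1, x.2.2))))
    => [[a [b [c d]]]|[[a b] [c d]]].
apply: eq_bigr => [[a [b [c d]]]] _ /=; rewrite inE /=.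
by do 4!(case: (_ \in B) => /=); case: (a + b == c + d).

Qed.

Lemma powR_pow (R : realType) (x r : R) (n m : nat) : 0 <= x ->
  r * n%:R = m%:R -> (x `^ r) ^+ n = x ^+ m.
Proof.
move=> hx h; rewrite -powR_mulrn ?powR_ge0 // -powRrM h powR_mulrn //.
Qed.

Arguments powR_pow {R} x {r n m}.

Lemma final (R : realType) (X n1 n2 E1 E2 q : R) :
  0 <= X -> 0 <= n1 -> 0 <= n2 -> 0 <= E1 -> 0 <= E2 -> 0 <= q ->
  X ^+ 8 <= n1 ^+ 4 * n2 ^+ 4 * E1 * E2 * q ->
  X <= n1 `^ (2^-1) * E1 `^ (8^-1) * n2 `^ (2^-1) * E2 `^ (8^-1) * q `^ (8^-1).
Proof.
move=> hX h1 h2 hE1 hE2 hq H.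
rewrite -(@ler_pXn2r _ 8) // ?nnegrE //; last by rewrite !mulr_ge0 ?powR_ge0.
have e2 : (2^-1 : R) * 8%:R = 4%:R by field.
have e8 : (8^-1 : R) * 8%:R = 1%:R by field.
rewrite !exprMn (powR_pow n1 h1 e2) (powR_pow n2 h2 e2) (powR_pow E1 hE1 e8)
  (powR_pow E2 hE2 e8) (powR_pow q hq e8) !expr1.
by apply: le_trans H _; rewrite le_eqVlt; apply/orP; left; apply/eqP; ring.
Qed.

Section E.
Variables (R : realType) (p : nat) (hp : prime p).
Local Notation e := (@e_p R p).
Local Open Scope complex_scope.

Definition w : R[i] := Complex (cos (2 * pi / p%:R)) (sin (2 * pi / p%:R)).

Lemma cis_nat (a : R) n :
  Complex (cos (n%:R * a)) (sin (n%:R * a)) = (Complex (cos a) (sin a)) ^+ n.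
Proof.
elim: n => [|n IH]; first by rewrite mul0r cos0 sin0 expr0.
rewrite exprS -IH mulrS mulrDl mul1r cosD sinD /=.
by congr Complex; ring.
Qed.

Lemma p_gt0 : (0 < p)%N. Proof. exact: prime_gt0. Qed.
Lemma pR_neq0 : (p%:R : R) != 0. Proof. by rewrite pnatr_eq0 -lt0n p_gt0. Qed.

Lemma e_pE (x : 'F_p) : e x = w ^+ nat_of_ord x.
Proof. rewrite /e_p /w -cis_nat; congr Complex; congr (_ _); ring. Qed.

Lemma wp : w ^+ p = 1.
Proof.
rewrite /w -cis_nat.
have -> : p%:R * (2 * pi / p%:R) = pi *+ 2 :> R.
  by rewrite mulrCA mulfV ?pR_neq0 // mulr1 mulr_natl.
by rewrite cos2pi sin2pi.
Qed.

Lemma eD (x y : 'F_p) : e (x + y) = e x * e y.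
Proof.
have -> : (x + y) = ((val x + val y)%:R : 'F_p) by rewrite natrD !natr_Zp.
by rewrite !e_pE val_Fp_nat // (expr_mod _ wp) exprD.
Qed.

Lemma e0 : e 0 = 1. Proof. by rewrite e_pE expr0. Qed.

Lemma wJ : w * w^* = 1.
Proof.
rewrite /w /=; apply/eqP; rewrite eq_complex /=; apply/andP; split; apply/eqP.
  by rewrite mulrN opprK -!expr2 cos2Dsin2.
by rewrite mulrN mulrC addNr.
Qed.

Lemma eJ1 x : e x * (e x)^* = 1.
Proof. by rewrite e_pE rmorphXn /= -exprMn wJ expr1n. Qed.

Lemma eJ x : (e x)^* = e (- x).
Proof.
have h : e x * e (- x) = 1 by rewrite -eD subrr e0.
by rewrite -[LHS]mulr1 -h mulrA [X in X * e (- x)]mulrC eJ1 mul1r.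
Qed.

Lemma norm_e x : `|e x| = 1.
Proof.
have h : `|e x| ^+ 2 = 1 by rewrite sqr_normc eJ1.
apply/eqP; rewrite -(@pexpr_eq1 _ _ 2) ?h //.
Qed.

Lemma e1_neq1 : e 1 != 1.
Proof.
rewrite e_pE.
have -> : nat_of_ord (1 : 'F_p) = 1%N.
  by rewrite -[1 in LHS]/(1%:R) val_Fp_nat // modn_small // prime_gt1.
rewrite expr1 /w; apply/negP; rewrite eq_complex /= => /andP [h1 h2].
have p2 : (2 <= p)%N by rewrite prime_gt1.
have [p_eq2|p_gt2] := eqVneq p 2.
  move: h1; rewrite p_eq2 mulrC mulrA mulVf ?mul1r ?cospi; last by rewrite pnatr_eq0.
  by move/eqP => h; move: (@ltr01 R); rewrite -h -(opprK 1) -subr_gt0 opprK; lra.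
have p3 : (2 < p)%N by rewrite ltn_neqAle eq_sym p_gt2.
move: h2; apply/negP; rewrite gt_eqF //.
apply: sin_gt0_pi; apply/andP; split.
  by rewrite divr_gt0 ?mulr_gt0 ?pi_gt0 ?ltr0n // prime_gt0.
rewrite ltr_pdivrMr ?ltr0n ?prime_gt0 // [pi * _]mulrC ltr_pM2r ?pi_gt0 //.
by have : (2%:R : R) < p%:R by rewrite ltr_nat.
Qed.

Lemma sum_e (x : 'F_p) : \sum_t e (t * x) = if x == 0 then p%:R else 0.
Proof.
have [->|hx] := eqVneq x 0.
  under eq_bigr do rewrite mulr0 e0.
  by rewrite sumr_const card_Fp.
have -> : \sum_t e (t * x) = \sum_t e t.
  by symmetry; rewrite (reindex_inj (mulIf hx)).
set S := \sum_t e t.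
have hS : S = S * e 1.
  rewrite {1}/S (reindex_inj (addIr 1)) /= mulr_suml.
  by apply: eq_bigr => t _; rewrite eD.
have : S * (e 1 - 1) = 0 by rewrite mulrBr mulr1 -hS subrr.
move/eqP; rewrite mulf_eq0 subr_eq0 (negbTE e1_neq1) orbF.
by move/eqP.
Qed.
End E.

Section Main.
Variables (R : realType) (p : nat) (hp : prime p).
Local Notation e := (@e_p R p).
Local Open Scope complex_scope.

Lemma cmodC (z : R[i]) : (cmod z)%:C = `|z|. Proof. by []. Qed.
Lemma cmod_ge0 (z : R[i]) : 0 <= cmod z.
Proof. by rewrite -ler0c cmodC normr_ge0. Qed.

Definition G (B : {set 'F_p}) (t : 'F_p) : R[i] := \sum_(b in B) e (t * b).

Lemma GJ B t : (G B t)^* = \sum_(b in B) e (- (t * b)).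
Proof. by rewrite /G rmorph_sum; apply: eq_bigr => b _; exact: eJ. Qed.

Lemma sqr_normG B t :
  `|G B t| ^+ 2 = \sum_(a in B) \sum_(b in B) e (t * (a - b)).
Proof.
rewrite sqr_normc GJ /G big_distrl; apply: eq_bigr => a _.
rewrite big_distrr; apply: eq_bigr => b _.
by rewrite mulrBr eD.
Qed.

Lemma fourthC B :
  \sum_t `|G B t| ^+ 4 = p%:R * (energy B)%:R.
Proof.
rewrite (energyE _ _ B) big_distrr.
have -> : \sum_t `|G B t| ^+ 4 = \sum_t \sum_(a in B) \sum_(b in B)
   \sum_(c in B) \sum_(d in B) e (t * ((a - b) + (c - d))).
  apply: eq_bigr => t _.
  rewrite (_ : 4 = 2 * 2)%N // exprM sqr_normG expr2 big_distrl.
  apply: eq_bigr => a _; rewrite big_distrl; apply: eq_bigr => b _.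
  rewrite big_distrr; apply: eq_bigr => c _; rewrite big_distrr.
  by apply: eq_bigr => d _; rewrite [in RHS]mulrDr [in RHS]eD.
have h : forall a b c d : 'F_p, \sum_t e (t * ((a - b) + (c - d)))
    = p%:R * ((a + c == b + d)%:R).
  move=> a b c d; rewrite sum_e //.
  have -> : (a - b + (c - d) == 0) = (a + c == b + d).
    by rewrite addrACA -opprD subr_eq0.
  by case: (_ == _); rewrite ?mulr1 ?mulr0.
rewrite exchange_big; apply: eq_bigr => a _.
rewrite [in RHS]exchange_big /= big_distrr.
rewrite exchange_big; apply: eq_bigr => x _.
rewrite exchange_big big_distrr; apply: eq_bigr => y _.
rewrite exchange_big big_distrr; apply: eq_bigr => d _.
exact: h.
Qed.

Lemma fourth B : \sum_t cmod (G B t) ^+ 4 = p%:R * (energy B)%:R.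
Proof.
apply: complexI; rewrite rmorph_sum rmorphM !rmorph_nat -fourthC.
by apply: eq_bigr => t _; rewrite rmorphXn.
Qed.

Lemma sum_delta (I : finType) (k : I) (f : I -> R) :
  \sum_t (k == t)%:R * f t = f k.
Proof.
rewrite (bigD1 k) //= eqxx mul1r big1 ?addr0 // => t /negbTE.
by rewrite eq_sym => ->; rewrite mul0r.
Qed.

Section Steps.
Variables (B1 B2 : {set 'F_p}) (c : 'F_p) (u v : 'F_p -> R[i]).
Hypotheses (hu : forall b, `|u b| = 1) (hv : forall b, `|v b| = 1).

Definition F (b1 : 'F_p) := \sum_(b2 in B2) v b2 * e (c * (b1 * b2)).

Lemma stepA :
  cmod (\sum_(b1 in B1) \sum_(b2 in B2) u b1 * v b2 * e (c * (b1 * b2)))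
  <= \sum_(b1 in B1) cmod (F b1).
Proof.
rewrite -lecR cmodC rmorph_sum /=.
apply: le_trans (ler_norm_sum _ _ _) _.
apply: ler_sum => b1 _.
have -> : \sum_(b2 in B2) u b1 * v b2 * e (c * (b1 * b2)) = u b1 * F b1.
  by rewrite /F big_distrr; apply: eq_bigr => b2 _; rewrite -[LHS]mulrA.
by rewrite normrM hu mul1r.
Qed.

Lemma stepB :
  (\sum_(b1 in B1) cmod (F b1)) ^+ 2
  <= #|B1|%:R * \sum_(b1 in B1) cmod (F b1) ^+ 2.
Proof.
have := CS _ _ (fun b => b \in B1) (fun _ => 1) (fun b => cmod (F b)).
under eq_bigr do rewrite mul1r.
under [X in _ <= X * _]eq_bigr do rewrite expr1n.
by rewrite sumr_const.
Qed.

Lemma FJ b1 : (F b1)^* = \sum_(b2 in B2) (v b2)^* * e (- (c * (b1 * b2))).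
Proof.
rewrite /F rmorph_sum; apply: eq_bigr => b2 _; rewrite rmorphM.
by congr (_ * _); exact: eJ.
Qed.

Lemma stepC :
  \sum_(b1 in B1) cmod (F b1) ^+ 2
  <= \sum_(b2 in B2) \sum_(b2' in B2) cmod (G B1 (c * (b2 - b2'))).
Proof.
have hQ : (\sum_(b1 in B1) cmod (F b1) ^+ 2)%:C =
   \sum_(b2 in B2) \sum_(b2' in B2) (v b2 * (v b2')^*) * G B1 (c * (b2 - b2')).
  rewrite rmorph_sum /=.
  transitivity (\sum_(b1 in B1) \sum_(b2 in B2) \sum_(b2' in B2)
     (v b2 * (v b2')^*) * e ((c * (b2 - b2')) * b1)).
    apply: eq_bigr => b1 _; rewrite rmorphXn /= cmodC sqr_normc FJ.
    rewrite /F big_distrl; apply: eq_bigr => b2 _.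
    rewrite big_distrr; apply: eq_bigr => b2' _ /=.
    rewrite mulrACA (_ : c * (b2 - b2') * b1 = c * (b1 * b2) + - (c * (b1 * b2'))); last by ring.
    by rewrite [in RHS]eD.
  rewrite exchange_big; apply: eq_bigr => b2 _.
  rewrite exchange_big; apply: eq_bigr => b2' _.
  by rewrite /G big_distrr.
rewrite -lecR -[X in X <= _]ger0_norm; last first.
  by rewrite ler0c; apply: sumr_ge0 => b _; apply: exprn_ge0; apply: cmod_ge0.
rewrite hQ rmorph_sum /=.
apply: le_trans (ler_norm_sum _ _ _) _.
apply: ler_sum => b2 _; rewrite rmorph_sum /=.
apply: le_trans (ler_norm_sum _ _ _) _.
apply: ler_sum => b2' _.
by rewrite !normrM hv normcJ hv !mul1r.
Qed.

Definition r (t : 'F_p) : R :=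
  \sum_(b2 in B2) \sum_(b2' in B2) (c * (b2 - b2') == t)%:R.

Lemma stepD :
  (\sum_(b2 in B2) \sum_(b2' in B2) cmod (G B1 (c * (b2 - b2')))) ^+ 2
  <= (#|B2|%:R * #|B2|%:R) *
     \sum_(b2 in B2) \sum_(b2' in B2) cmod (G B1 (c * (b2 - b2'))) ^+ 2.
Proof.
pose P := fun x : 'F_p * 'F_p => (x.1 \in B2) && (x.2 \in B2).
pose g := fun x : 'F_p * 'F_p => cmod (G B1 (c * (x.1 - x.2))).
have h := CS _ _ P (fun _ => 1) g.
have e1 : \sum_(x | P x) 1 * g x = \sum_(x | P x) g x.
  by apply: eq_bigr => x _; rewrite mul1r.
have e2 : \sum_(x | P x) (1:R) ^+ 2 = #|B2|%:R * #|B2|%:R.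
  rewrite (eq_bigr (fun _ => 1)) => [|x _]; last by rewrite expr1n.
  rewrite /P -(pair_big (fun b => b \in B2) (fun b => b \in B2) (fun _ _ => (1:R))).
  change (\sum_(i in B2) \sum_(j in B2) (1:R) = #|B2|%:R * #|B2|%:R).
  by rewrite !sumr_const mulr_natr.
rewrite e1 e2 in h.
have e3 : \sum_(x | P x) g x = \sum_(b2 in B2) \sum_(b2' in B2) cmod (G B1 (c * (b2 - b2'))).
  by rewrite /P /g pair_big.
have e4 : \sum_(x | P x) g x ^+ 2 = \sum_(b2 in B2) \sum_(b2' in B2) cmod (G B1 (c * (b2 - b2'))) ^+ 2.
  by rewrite /P /g pair_big.
by rewrite -e3 -e4.
Qed.

Lemma stepE :
  (\sum_(b2 in B2) \sum_(b2' in B2) cmod (G B1 (c * (b2 - b2'))) ^+ 2) ^+ 2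
  <= (\sum_t r t ^+ 2) * \sum_t cmod (G B1 t) ^+ 4.
Proof.
have -> : \sum_(b2 in B2) \sum_(b2' in B2) cmod (G B1 (c * (b2 - b2'))) ^+ 2
    = \sum_t r t * cmod (G B1 t) ^+ 2.
  symmetry; rewrite /r; under eq_bigr do rewrite big_distrl.
  rewrite exchange_big; apply: eq_bigr => b2 _ /=.
  under eq_bigr do rewrite big_distrl.
  rewrite exchange_big; apply: eq_bigr => b2' _ /=.
  by rewrite sum_delta.
have := CS _ _ (fun _ => true) r (fun t => cmod (G B1 t) ^+ 2).
by under [X in _ <= _ * X]eq_bigr do rewrite -exprM.
Qed.

Lemma stepF : c != 0 -> \sum_t r t ^+ 2 = (energy B2)%:R.
Proof.
move=> hc.
have -> : \sum_t r t ^+ 2 = \sum_(a in B2) \sum_(b in B2) \sum_(a' in B2)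
    \sum_(b' in B2) ((a + b' == a' + b)%:R : R).
  transitivity (\sum_t \sum_(a in B2) \sum_(b in B2) \sum_(a' in B2)
    \sum_(b' in B2) ((c * (a - b) == t)%:R * (c * (a' - b') == t)%:R : R)).
    apply: eq_bigr => t _; rewrite expr2 /r big_distrl; apply: eq_bigr => a _.
    rewrite big_distrl; apply: eq_bigr => b _ /=.
    rewrite big_distrr; apply: eq_bigr => a' _ /=.
    by rewrite big_distrr.
  rewrite exchange_big; apply: eq_bigr => a _.
  rewrite exchange_big; apply: eq_bigr => b _.
  rewrite exchange_big; apply: eq_bigr => a' _.
  rewrite exchange_big; apply: eq_bigr => b' _.
  rewrite sum_delta (inj_eq (mulfI hc)).
  congr (_%:R).
  rewrite -subr_eq0 -[in RHS]subr_eq0 -oppr_eq0; congr (_ == 0); ring.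
rewrite (energyE _ _ B2); apply: eq_bigr => a _.
under eq_bigr do rewrite exchange_big.
rewrite exchange_big /=.
under eq_bigr do rewrite exchange_big.
by [].
Qed.

End Steps.

Lemma cmodM (z w : R[i]) : cmod (z * w) = cmod z * cmod w.
Proof. by apply: complexI; rewrite rmorphM /= !cmodC normrM. Qed.

Lemma cmod_e x : cmod (e x) = 1.
Proof. by apply: complexI; rewrite cmodC norm_e. Qed.

Lemma expand (theta b1 b2 : 'F_p) :
  e (theta * (b1 - b2) ^+ 2) =
  e (theta * b1 ^+ 2) * e (theta * b2 ^+ 2) * e (- (theta *+ 2) * (b1 * b2)).
Proof.
rewrite (_ : theta * (b1 - b2) ^+ 2 = theta * b1 ^+ 2 + theta * b2 ^+ 2
  + - (theta *+ 2) * (b1 * b2)); last by ring.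
by rewrite !eD.
Qed.

Definition nn (B : {set 'F_p}) : R := #|B|%:R.

Lemma main_odd (theta : 'F_p) (B1 B2 : {set 'F_p}) :
  - (theta *+ 2) != 0 ->
  cmod (\sum_(b1 in B1) \sum_(b2 in B2) e (theta * (b1 - b2) ^+ 2)) ^+ 8
  <= nn B1 ^+ 4 * nn B2 ^+ 4 * (energy B1)%:R * (energy B2)%:R * p%:R.
Proof.
move=> hc; set c := - (theta *+ 2).
pose u := fun b : 'F_p => e (theta * b ^+ 2).
have hu : forall b, `|u b| = 1 by move=> b; apply: norm_e.
have -> : \sum_(b1 in B1) \sum_(b2 in B2) e (theta * (b1 - b2) ^+ 2) =
   \sum_(b1 in B1) \sum_(b2 in B2) u b1 * u b2 * e (c * (b1 * b2)).
  by apply: eq_bigr => b1 _; apply: eq_bigr => b2 _; rewrite expand.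
set X := cmod _.
have hA := stepA B1 B2 c u u hu.
have hB := stepB B1 B2 c u.
have hC := stepC B1 B2 c u hu.
have hD := stepD B1 B2 c.
have hE := stepE B1 B2 c.
rewrite (stepF B2 c hc) (fourth B1) in hE.
rewrite -/X in hA.
set A := \sum_(b1 in B1) _ in hA hB.
set Y := \sum_(b1 in B1) _ in hB hC.
set T := \sum_(b2 in B2) _ in hC hD.
set U := \sum_(b2 in B2) _ in hD hE.
have X0 : 0 <= X by apply: cmod_ge0.
have A0 : 0 <= A by apply: sumr_ge0 => b _; apply: cmod_ge0.
have Y0 : 0 <= Y by apply: sumr_ge0 => b _; apply: exprn_ge0; apply: cmod_ge0.
have T0 : 0 <= T by apply: sumr_ge0 => b _; apply: sumr_ge0 => b' _; apply: cmod_ge0.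
have U0 : 0 <= U.
  by apply: sumr_ge0 => b _; apply: sumr_ge0 => b' _; apply: exprn_ge0; apply: cmod_ge0.
have n10 : 0 <= nn B1 by apply: ler0n.
have n20 : 0 <= nn B2 by apply: ler0n.
have h1 : X ^+ 8 <= A ^+ 8 by apply: lerXn2r; rewrite ?nnegrE.
have h2 : A ^+ 8 <= (nn B1 * T) ^+ 4.
  rewrite (_ : 8 = 2 * 4)%N // exprM; apply: lerXn2r; rewrite ?nnegrE ?exprn_ge0 ?mulr_ge0 //.
  by apply: le_trans hB _; apply: ler_wpM2l.
have h3 : (T ^+ 2) ^+ 2 <= ((nn B2 * nn B2) * U) ^+ 2.
  by apply: lerXn2r; rewrite ?nnegrE ?exprn_ge0 ?mulr_ge0.
have h4 : (nn B1 * T) ^+ 4 = nn B1 ^+ 4 * (T ^+ 2) ^+ 2 by rewrite -exprM exprMn.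
have h5 : ((nn B2 * nn B2) * U) ^+ 2 = nn B2 ^+ 4 * U ^+ 2.
  by rewrite exprMn -expr2 -exprM.
apply: le_trans h1 _; apply: le_trans h2 _; rewrite h4.
apply: le_trans (ler_wpM2l (exprn_ge0 _ n10) h3) _; rewrite h5.
have h6 := ler_wpM2l (mulr_ge0 (exprn_ge0 4 n10) (exprn_ge0 4 n20)) hE.
rewrite mulrA; apply: le_trans h6 _.
by rewrite le_eqVlt; apply/orP; left; apply/eqP; ring.
Qed.

Lemma cmod0 : cmod (0 : R[i]) = 0.
Proof. by apply: complexI; rewrite cmodC normr0. Qed.

Lemma p2_set (theta : 'F_p) (B : {set 'F_p}) : theta != 0 -> p = 2%N ->
  cmod (\sum_(b in B) e (theta * b ^+ 2)) ^+ 8 <= nn B ^+ 4 * (energy B)%:R.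
Proof.
move=> htheta p2.
have rhs0 : 0 <= nn B ^+ 4 * (energy B)%:R by rewrite mulr_ge0 ?exprn_ge0 ?ler0n.
have [->|hB0] := eqVneq B finset.set0.
  by rewrite big_set0 cmod0 expr0n /= mulr_ge0 ?exprn_ge0 ?ler0n.
have [->|hBT] := eqVneq B [set: 'F_p].
  have -> : \sum_(b in [set: 'F_p]) e (theta * b ^+ 2) = \sum_t e (t * theta).
    rewrite (eq_bigl (fun _ => true)) => [|t]; last by rewrite inE.
    apply: eq_bigr => t _; rewrite mulrC.
    have hc : #|'F_p| = 2%N by rewrite card_Fp.
    by have := expf_card t; rewrite hc => ->.
  by rewrite sum_e // (negbTE htheta) cmod0 expr0n /=; rewrite mulr_ge0 ?exprn_ge0 ?ler0n.
have c1 : (0 < #|B|)%N by rewrite card_gt0.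
have c2 : (#|B| < 2)%N.
  rewrite ltnNge; apply/negP => h; move/negP: hBT; apply.
  by rewrite eqEcard finset.subsetT cardsT (_ : #|'F_p| = 2%N) // card_Fp.
have n1 : #|B| = 1%N by apply/eqP; rewrite eqn_leq -ltnS c1 c2.
have nB : nn B = 1 by rewrite /nn n1.
have hf : cmod (\sum_(b in B) e (theta * b ^+ 2)) <= 1.
  rewrite -lecR cmodC; apply: le_trans (ler_norm_sum _ _ _) _.
  under eq_bigr do rewrite norm_e.
  by rewrite sumr_const n1.
have hE : (0 < energy B)%N.
  case/set0Pn: hB0 => b hb.
  rewrite /energy card_gt0; apply/set0Pn; exists ((b, b), (b, b)).
  by rewrite inE /= hb eqxx.
rewrite nB expr1n mul1r; apply: le_trans (_ : 1 <= _).
  by apply: exprn_ile1 => //; apply: cmod_ge0.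
by rewrite ler1n.
Qed.

End Main.

Theorem lemma9 (R : realType) (p : nat) (hp : prime p) (theta : 'F_p)
  (htheta : theta != 0) (B1 B2 : {set 'F_p}) :
  cmod (\sum_(b1 in B1) \sum_(b2 in B2) e_p R (theta * (b1 - b2) ^+ 2))
  <= (#|B1|%:R : R) `^ (2^-1) * (energy B1)%:R `^ (8^-1)
     * (#|B2|%:R : R) `^ (2^-1) * (energy B2)%:R `^ (8^-1)
     * (p%:R : R) `^ (8^-1).
Proof.
apply: final; rewrite ?ler0n ?cmod_ge0 //.
have [p2|p_ne2] := eqVneq p 2%N; last first.
  apply: main_odd => //; rewrite oppr_eq0 -mulr_natr mulf_eq0 negb_or htheta /=.
  rewrite -(dvdn_pcharf (pchar_Fp hp)); apply/negP => /dvdn_leq h.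
  by move: p_ne2; rewrite eqn_leq (h isT) prime_gt1.
have h2 : theta *+ 2 = 0.
  have e2 : (2%:R : 'F_p) = p%:R by congr (_%:R); rewrite p2.
  by rewrite -mulr_natr e2 pchar_Fp_0 // mulr0.
have -> : \sum_(b1 in B1) \sum_(b2 in B2) e_p R (theta * (b1 - b2) ^+ 2) =
  (\sum_(b1 in B1) e_p R (theta * b1 ^+ 2)) * \sum_(b2 in B2) e_p R (theta * b2 ^+ 2).
  rewrite big_distrl; apply: eq_bigr => b1 _; rewrite big_distrr.
  apply: eq_bigr => b2 _; rewrite expand // h2 oppr0 mul0r e0 // mulr1.
  by [].
rewrite cmodM exprMn.
have g1 := p2_set R p hp theta B1 htheta p2.
have g2 := p2_set R p hp theta B2 htheta p2.
apply: le_trans (ler_pM _ _ g1 g2) _; rewrite ?exprn_ge0 ?cmod_ge0 //.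
rewrite /nn -mulrA mulrACA !mulrA ler_peMr ?mulr_ge0 ?exprn_ge0 ?ler0n //.
by rewrite p2 ler1n.
Qed.
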